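(* Under Assumptions (A1)--(A7) below, let $\mathcal{P}_n^*=\{P_{j,n}^*\}_{j=1}^{k_n}$ be an optimal SMML partition of the countable data space $\mathcal{X}_n$ with codepoints $\{\bm\theta_{j,n}^*\}_{j=1}^{k_n}$, and define the SMML estimator $\hat{\bm\theta}_n^{\mathrm{SMML}}(\mathbf{x})=\sum_{j=1}^{k_n}\bm\theta_{j,n}^*\mathds{1}_{\{\mathbf{x}\in P_{j,n}^*\}}$. Let $\mathbf{X}_n$ be drawn from $p_n(\cdot\mid\bm\theta_0)$ with $\bm\theta_0\in\operatorname{int}(\Theta)$, and fix a compact $K\subset\Theta$ with $\bm\theta_0\in\operatorname{int}(K)$ on which (A5) holds. Then $\hat{\bm\theta}_n^{\mathrm{SMML}}(\mathbf{X}_n)\to\bm\theta_0$ in probability and $$\|\hat{\bm\theta}_n^{\mathrm{SMML}}(\mathbf{X}_n)-\bm\theta_0\|=O_p(n^{-1/2}).$$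
   Context: Setting: $X_1,\dots,X_n$ i.i.d. from a parametric family with per-observation density/mass $f(\cdot\mid\bm\theta)$, $\bm\theta\in\Theta\subseteq\mathbb{R}^p$; a data set $\mathbf{x}=(x_1,\dots,x_n)$ lies in a countable sample space $\mathcal{X}_n$; $p_n(\mathbf{x}\mid\bm\theta)$ is the joint likelihood; $\pi$ is a prior density; $r_n(\mathbf{x})=\int_\Theta p_n(\mathbf{x}\mid\bm\theta)\pi(\bm\theta)d\bm\theta$. For a finite partition $\mathcal{P}=\{P_1,\dots,P_k\}$ of $\mathcal{X}_n$ with $q_j=\sum_{\mathbf{x}\in P_j}r_n(\mathbf{x})>0$, the SMML codepoint of $P_j$ is $\bm\theta_j^*=\arg\max_{\bm\theta}\sum_{\mathbf{x}\in P_j}r_n(\mathbf{x})\log p_n(\mathbf{x}\mid\bm\theta)$ and the expected codelength is $\mathcal{I}(\mathcal{P})=-\sum_j q_j\log q_j-\sum_j\sum_{\mathbf{x}\in P_j}r_n(\mathbf{x})\log p_n(\mathbf{x}\mid\bm\theta_j^* )$; an optimal SMML partition minimises $\mathcal{I}$ over the admissible partitions. $\hat{\bm\theta}(\mathbf{x})$ is the MLE. ${\bf J}_1(\bm\theta)=\mathbb{E}_{\bm\theta}[\nabla\log f(X_1\mid\bm\theta)\nabla\log f(X_1\mid\bm\theta)']$ is the per-observation Fisher information; $d_F$ is the per-observation Fisher--Rao distance, the Riemannian distance of the metric ${\bf J}_1$. Assumptions: (A1) $\Theta$ is open in $\mathbb{R}^p$. (A2) The true parameter $\bm\theta_0\in\operatorname{int}(\Theta)$.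 (A3) The support of $f(\cdot\mid\bm\theta)$ does not depend on $\bm\theta$; $\pi$ is a proper density, continuous and strictly positive near $\bm\theta_0$; $r_n(\mathbf{x})<\infty$ for all $n,\mathbf{x}$. (A4) $\bm\theta\mapsto\log p_n(\mathbf{x}\mid\bm\theta)$ is $C^3$ on $\Theta$ for each $\mathbf{x}$, and the MLE $\hat{\bm\theta}(\mathbf{x})$ exists in $\Theta$ for all data sets in the SMML cells considered. (A5) ${\bf J}_1$ exists and for every compact $K\subset\Theta$ there are $0<c_1(K)\le c_2(K)<\infty$ with $c_1(K){\bf I}_p\preceq{\bf J}_1(\bm\theta)\preceq c_2(K){\bf I}_p$ for $\bm\theta\in K$. (A6) Differentiation under the integral sign is valid where used (so that standard MLE asymptotics hold: $\|\hat{\bm\theta}(\mathbf{X}_n)-\bm\theta_0\|=O_p(n^{-1/2})$). (A7) For every compact $K\subset\Theta$ on which (A5) holds, the local mesh size $\delta_n(\bm\theta)$ of the SMML quantisation measured in $d_F$ (the Fisher--Rao diameter of the local quantisation cell, bounding $d_F(\hat{\bm\theta}(\mathbf{x}),\bm\theta_{j,n}^* )$ for $\mathbf{x}\in P_{j,n}^*$ with $\hat{\bm\theta}(\mathbf{x})\in K$) satisfies $\sup_{\bm\theta\in K}\delta_n(\bm\theta)=O(n^{-1/2})$. *)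

(* Defs.v *)
From HB Require Import structures.
From mathcomp Require Import all_boot all_order all_algebra.
From mathcomp Require Import all_classical all_reals all_analysis.
Set Implicit Arguments. Unset Strict Implicit. Unset Printing Implicit Defensive.
Import Order.TTheory GRing.Theory Num.Theory.
Import numFieldNormedType.Exports.
Local Open Scope classical_set_scope.
Local Open Scope ring_scope.

Section SMML.
Variables (R : realType) (p : nat) (Y : countType).
Local Notation vec := 'rV[R]_p.

Definition enorm (v : vec) : R := Num.sqrt (\sum_(i < p) v ord0 i ^+ 2).

Definition qform (A : 'M[R]_p) (v : vec) : R := (v *m A *m v^T) ord0 ord0.

(** Sum of a real family over a countable type (positive part minus negative
    part); meaningful when [rsummable h]. *)
Definition rsum (T : choiceType) (h : T -> R) : R :=
  (fine (\esum_(x in [set: T]) (Num.max (h x) 0)%:E) -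
   fine (\esum_(x in [set: T]) (Num.max (- h x) 0)%:E))%R.
Definition rsummable (T : choiceType) (h : T -> R) : Prop :=
  summable [set: T] (EFin \o h).

Definition lik (f : vec -> Y -> R) (n : nat) (x : n.-tuple Y) (th : vec) : R :=
  \prod_(i < n) f th (tnth x i).

Definition Pdata (f : vec -> Y -> R) (th : vec) (n : nat) (A : set (n.-tuple Y))
  : \bar R := \esum_(x in A) (lik f x th)%:E.

Definition partial (g : vec -> R) (i : 'I_p) (th : vec) : R :=
  derive g th (delta_mx 0 i).

Fixpoint Ck (k : nat) (U : set vec) (g : vec -> R) : Prop :=
  match k with
  | 0 => forall th, U th -> {for th, continuous g}
  | k'.+1 => (forall th, U th -> differentiable g th) /\
             (forall i, Ck k' U (partial g i))
  end.

Definition score (f : vec -> Y -> R) (y : Y) (i : 'I_p) (th : vec) : R :=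
  partial (fun t => ln (f t y)) i th.

Definition fisher1 (f : vec -> Y -> R) (th : vec) : 'M[R]_p :=
  \matrix_(i < p, j < p) rsum (fun y => f th y * score f y i th * score f y j th).

Definition fisher_exists (f : vec -> Y -> R) (Theta : set vec) : Prop :=
  forall th, Theta th -> forall i j : 'I_p,
    rsummable (fun y => f th y * score f y i th * score f y j th).

Definition C1_curve (Theta : set vec) (g : R -> vec) (a b : vec) : Prop :=
  [/\ g 0 = a, g 1 = b,
      (forall t, 0 <= t <= 1 -> Theta (g t)),
      (forall t, 0 <= t <= 1 -> derivable g t 1) &
      {within `[0, 1], continuous (derive1 g)}].

Definition fr_length (f : vec -> Y -> R) (g : R -> vec) : \bar R :=
  (\int[lebesgue_measure]_(t in `[0%R, 1%R]%classic)
     (Num.sqrt (qform (fisher1 f (g t)) (derive1 g t)))%:E)%E.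

(** Per-observation Fisher--Rao distance (Riemannian distance of the metric J_1
    on Theta); +oo if no curve joins a and b. *)
Definition fr_dist (f : vec -> Y -> R) (Theta : set vec) (a b : vec) : \bar R :=
  ereal_inf [set fr_length f g | g in [set g | C1_curve Theta g a b]].

(** Iterated Lebesgue integral over R^m of a [\bar R]-valued function of the
    coordinates; used to integrate nonnegative functions on R^p. *)
Fixpoint iint (m : nat) (G : (nat -> R) -> \bar R) : \bar R :=
  match m with
  | 0 => G (fun _ => 0)
  | m'.+1 => (\int[lebesgue_measure]_t
               iint m' (fun u => G (fun i => match i with
                                             | 0 => t
                                             | i'.+1 => u i' end)))%E
  end.

Definition leb_int (g : vec -> \bar R) : \bar R := iint p (fun u => g (\row_i u i)).

Definition prior_pred (f : vec -> Y -> R) (pi : vec -> R) (Theta : set vec)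
  (n : nat) (x : n.-tuple Y) : \bar R :=
  leb_int (fun th => (\1_Theta th * lik f x th * pi th)%:E).

(** A finite partition of X_n into k cells, given by a cell-index map c. *)
Definition cell_mass f pi Theta n k (c : n.-tuple Y -> 'I_k) (j : 'I_k) : \bar R :=
  \esum_(x in c @^-1` [set j]) prior_pred f pi Theta x.

Definition cell_loss f pi Theta n k (c : n.-tuple Y -> 'I_k) (j : 'I_k) (th : vec)
  : \bar R :=
  \esum_(x in c @^-1` [set j]) (prior_pred f pi Theta x * (- ln (lik f x th))%:E)%E.

Definition is_codepoint f pi Theta n k (c : n.-tuple Y -> 'I_k) (j : 'I_k) (th : vec)
  : Prop :=
  Theta th /\ forall th', Theta th' ->
    (cell_loss f pi Theta c j th <= cell_loss f pi Theta c j th')%E.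

Definition admissible f pi Theta n k (c : n.-tuple Y -> 'I_k) (cp : 'I_k -> vec)
  : Prop :=
  forall j, (0 < cell_mass f pi Theta c j)%E /\ is_codepoint f pi Theta c j (cp j).

Definition codelength f pi Theta n k (c : n.-tuple Y -> 'I_k) (cp : 'I_k -> vec)
  : \bar R :=
  ((\sum_(j < k) (- (fine (cell_mass f pi Theta c j) *
                     ln (fine (cell_mass f pi Theta c j))))%:E) +
   \sum_(j < k) cell_loss f pi Theta c j (cp j))%E.

Definition smml_optimal f pi Theta n k (c : n.-tuple Y -> 'I_k) (cp : 'I_k -> vec)
  : Prop :=
  admissible f pi Theta c cp /\
  forall k' (c' : n.-tuple Y -> 'I_k') (cp' : 'I_k' -> vec),
    admissible f pi Theta c' cp' ->
    (codelength f pi Theta c cp <= codelength f pi Theta c' cp')%E.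

Definition conv_in_prob (P : forall n, set (n.-tuple Y) -> \bar R)
  (T : forall n, n.-tuple Y -> vec) (th0 : vec) : Prop :=
  forall eta : R, 0 < eta ->
    (fun n => P n [set x | eta < enorm (T n x - th0)]) @ \oo --> 0%E.

Definition Op_sqrt (P : forall n, set (n.-tuple Y) -> \bar R)
  (Z : forall n, n.-tuple Y -> R) : Prop :=
  forall eps : R, 0 < eps -> exists M : R, 0 < M /\ exists N : nat,
    forall n, (N <= n)%N ->
      (P n [set x | (M < Num.sqrt n%:R * Z n x)%R] < eps%:E)%E.

End SMML.

(* Main.v *)
Require Import Defs.
From HB Require Import structures.
From mathcomp Require Import all_boot all_order all_algebra.
From mathcomp Require Import all_classical all_reals all_analysis.
From mathcomp Require Import measurable_realfun.
From mathcomp Require Import lra.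
Import Order.TTheory GRing.Theory Num.Theory.
Import numFieldNormedType.Exports.
Local Open Scope classical_set_scope.
Local Open Scope ring_scope.

Section Aux.
Variables (R : realType) (p : nat).
Local Notation vec := 'rV[R]_p.

Lemma coord_le_norm (v : vec) i : `|v ord0 i| <= `|v|.
Proof.
have /mapP[j Hj ->] : `|v ord0 i| \in [seq `|v x.1 x.2| | x : 'I_1 * 'I_p].
  by apply/mapP; exists (ord0, i) => //=; rewrite mem_enum.
by rewrite [leRHS]/Num.Def.normr /= mx_normrE; apply/bigmax_geP; right => /=; exists j.
Qed.

Lemma norm_coord (v : vec) : `|v| != 0 -> exists i, `|v| = `|v ord0 i|.
Proof.
move=> vn0; have [[i j] /= E] := mx_norm_neq0 vn0.
have ei : i = ord0 by apply/val_inj; case: i {E} => [[]].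
exists j; rewrite -ei; exact: E.
Qed.

Lemma enorm_ge0 (v : vec) : 0 <= enorm v.
Proof. exact: sqrtr_ge0. Qed.

Lemma coord_le_enorm (v : vec) i : `|v ord0 i| <= enorm v.
Proof.
rewrite /enorm -sqrtr_sqr ler_sqrt; last by apply: sumr_ge0 => j _; exact: sqr_ge0.
by rewrite (bigD1 i) //= lerDl; apply: sumr_ge0 => j _; exact: sqr_ge0.
Qed.

Lemma norm_le_enorm (v : vec) : `|v| <= enorm v.
Proof.
have [v0|vn0] := eqVneq `|v| 0; first by rewrite v0 enorm_ge0.
by have [i ->] := @norm_coord v vn0; exact: coord_le_enorm.
Qed.

Lemma enorm_le_norm (v : vec) : enorm v <= p%:R * `|v|.
Proof.
rewrite /enorm -[X in _ <= X]ger0_norm ?mulr_ge0 // -sqrtr_sqr ler_sqrt ?sqr_ge0 //.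
apply: (@le_trans _ _ (\sum_(i < p) `|v| ^+ 2)).
  apply: ler_sum => i _; rewrite -real_normK ?num_real //.
  by rewrite lerXn2r ?nnegrE ?coord_le_norm.
rewrite sumr_const card_ord exprMn -[_ *+ p]mulr_natl.
apply: ler_wpM2r; first exact: sqr_ge0.
rewrite -natrX ler_nat; case: (p) => // q.
by rewrite expnS leq_pmulr // expn_gt0.
Qed.

End Aux.
Section Int.
Variable R : realType.

Lemma le_integral_gen d (T : measurableType d) (mu : {measure set T -> \bar R})
  (D1 D2 : set T) (f1 f2 : T -> \bar R) :
  (forall x, D1 x -> (0 <= f1 x)%E) -> (forall x, D2 x -> (0 <= f2 x)%E) ->
  (forall x, ((f1 \_ D1) x <= (f2 \_ D2) x)%E) ->
  (\int[mu]_(x in D1) f1 x <= \int[mu]_(x in D2) f2 x)%E.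
Proof.
move=> f10 f20 f12; rewrite !ge0_integralE //.
apply: le_ereal_sup => _ [h hle <-]; exists h => //= x.
exact: le_trans (hle x) (f12 x).
Qed.

Lemma scalar_ftc_bound (phi psi : R -> R) (T c : R) : 0 < T -> 0 <= c ->
  (forall t, 0 <= t <= T -> derivable phi t 1 /\ derive1 phi t = psi t) ->
  {within `[0, T], continuous psi} ->
  ((c * `|phi T - phi 0|)%:E <=
     \int[lebesgue_measure]_(t in `[0%R, T[%classic) (c * `|psi t|)%:E)%E.
Proof.
move=> T0 c0 dphi cpsi.
have mpsi : measurable_fun `[0, T] psi.
  exact: subspace_continuous_measurable_fun.
have mapsi : measurable_fun `[0, T] (fun t => c * `|psi t|).
  apply: measurable_funM => //; exact: measurableT_comp.
rewrite integral_itv_bndo_bndc; last first.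
  apply/measurable_EFinP; apply: measurable_funS mapsi => //.
  by apply: subset_itvl; rewrite bnd_simp.
under eq_integral do rewrite EFinM.
rewrite (ge0_integralZl_EFin _ _ _ _ c0) //; last first.
  by apply/measurable_EFinP; exact: measurableT_comp.
rewrite EFinM; apply: lee_wpmul2l; first by rewrite lee_fin.
have dpos : derivable_oo_LRcontinuous phi 0 T.
  split.
  - move=> t; rewrite in_itv /= => /andP[t0 tT].
    by have [] := dphi t; rewrite ?ltW.
  - apply: cvg_at_right_filter; apply: differentiable_continuous.
    by rewrite -derivable1_diffP; have [] := dphi 0; rewrite ?lexx ?ltW.
  - apply: cvg_at_left_filter; apply: differentiable_continuous.
    by rewrite -derivable1_diffP; have [] := dphi T; rewrite ?lexx ?ltW.
have := continuous_FTC2 T0 cpsi dpos.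
have H : {in `]0, T[, derive1 phi =1 psi}.
  move=> t; rewrite in_itv /= => /andP[t0 tT].
  by have [] := dphi t; rewrite ?ltW.
move=> /(_ H) E.
rewrite -abse_EFin EFinB -E.
apply: le_trans (le_abse_integral _ _ _) _ => //.
  by apply/measurable_EFinP.
Qed.


End Int.
Section Comp.
Variables (R : realType) (p : nat).

Lemma comp_deriv (g : R -> 'rV[R]_p) t i : derivable g t 1 ->
  derivable (fun s => g s ord0 i) t 1 /\
  derive1 (fun s => g s ord0 i) t = (derive1 g t) ord0 i.
Proof.
move=> dg.
pose q := fun h : R => h^-1 *: ((g \o shift t) (h *: (1:R)) - g t).
have Hq : (fun h : R => h^-1 *: (((fun s => g s ord0 i) \o shift t) (h *: (1:R))
     - g t ord0 i)) = (fun M : 'rV[R]_p => M ord0 i) \o q.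
  by apply/funext => h; rewrite /q /= !mxE.
have L : (fun M : 'rV[R]_p => M ord0 i) \o q @ 0^' --> (derive g t 1) ord0 i.
  apply: cvg_comp; first exact: dg.
  exact: coord_continuous.
split; first by rewrite /derivable Hq; apply/cvgP: L.
by rewrite derive1E /derive Hq (cvg_lim _ L) // derive1E.
Qed.

Lemma comp_deriv_cont (g : R -> 'rV[R]_p) (A : set R) i :
  {within A, continuous g} -> {within A, continuous (fun s => g s ord0 i)}.
Proof.
move=> cg x.
apply: (@continuous_comp (subspace A) _ _ (g : subspace A -> _)
  (fun M : 'rV[R]_p => M ord0 i)); first exact: cg.
exact: coord_continuous.
Qed.

End Comp.



Section Geo.
Variables (R : realType) (p : nat) (Y : countType).
Variables (f : 'rV[R]_p -> Y -> R) (Theta : set 'rV[R]_p) (theta0 : 'rV[R]_p).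
Variables (r c1 : R).
Hypothesis r0 : 0 < r.
Hypothesis c10 : 0 < c1.
Hypothesis HB : forall th, `|theta0 - th| <= 2 * r -> forall v : 'rV[R]_p,
  c1 * enorm v ^+ 2 <= qform (fisher1 f th) v.

Lemma pt_bound th (v : 'rV[R]_p) i : `|theta0 - th| <= 2 * r ->
  Num.sqrt c1 * `|v ord0 i| <= Num.sqrt (qform (fisher1 f th) v).
Proof.
move=> hth; apply: (@le_trans _ _ (Num.sqrt c1 * enorm v)).
  by rewrite ler_wpM2l ?sqrtr_ge0 ?coord_le_enorm.
rewrite -[enorm v]ger0_norm ?enorm_ge0 // -sqrtr_sqr -(sqrtrM _ (ltW c10)).
by apply: ler_wsqrtr; exact: HB.
Qed.

Lemma seg_bound (g : R -> 'rV[R]_p) a b T i : C1_curve Theta g a b ->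
  0 < T <= 1 -> (forall s, 0 <= s < T -> `|theta0 - g s| <= 2 * r) ->
  ((Num.sqrt c1 * `|g T ord0 i - g 0 ord0 i|)%:E <= fr_length f g)%E.
Proof.
move=> [g0 g1 gT dg cg'] /andP[T0 T1] gB.
have hT : forall t, 0 <= t <= T -> 0 <= t <= 1.
  by move=> t /andP[-> tT] /=; exact: le_trans T1.
apply: le_trans.
  apply: (@scalar_ftc_bound R (fun s => g s ord0 i)
            (fun s => (derive1 g s) ord0 i) T (Num.sqrt c1) T0 (sqrtr_ge0 _)).
    by move=> t /hT /dg /comp_deriv.
  apply: comp_deriv_cont; apply: continuous_subspaceW cg'.
  by apply: subset_itvl; rewrite bnd_simp.
rewrite /fr_length; apply: le_integral_gen.
- by move=> x _; rewrite lee_fin mulr_ge0 ?sqrtr_ge0.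
- by move=> x _; rewrite lee_fin sqrtr_ge0.
move=> x; rewrite /patch; case: ifPn => [|_]; last first.
  by case: ifPn => _ //; rewrite lee_fin sqrtr_ge0.
rewrite inE /= in_itv /= => /andP[x0 xT].
rewrite ifT; last by rewrite inE /= in_itv /= x0 /= (le_trans (ltW xT)).
by rewrite lee_fin pt_bound // gB // x0.
Qed.

End Geo.



Lemma lraA {R : realType} {r x : R} : 0 < r -> 2 * r <= x -> x <= r -> False.
Proof. move=> *; lra. Qed.
Lemma lraB {R : realType} {r x y z : R} : 2 * r <= x -> y <= r -> x <= y + z -> r <= z.
Proof. move=> *; lra. Qed.
Lemma lraC {R : realType} {a b c : R} : a <= b -> b <= c -> c < a -> False.
Proof. move=> *; lra. Qed.

Section Geo2.
Variables (R : realType) (p : nat) (Y : countType).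
Variables (f : 'rV[R]_p -> Y -> R) (Theta : set 'rV[R]_p) (theta0 : 'rV[R]_p).
Variables (r c1 : R).
Hypothesis r0 : 0 < r.
Hypothesis c10 : 0 < c1.
Hypothesis HB : forall th, `|theta0 - th| <= 2 * r -> forall v : 'rV[R]_p,
  c1 * enorm v ^+ 2 <= qform (fisher1 f th) v.

Lemma curve_close (g : R -> 'rV[R]_p) a b L : C1_curve Theta g a b ->
  `|theta0 - a| <= r -> (fr_length f g <= L%:E)%E -> L < Num.sqrt c1 * r ->
  forall i, Num.sqrt c1 * `|b ord0 i - a ord0 i| <= L.
Proof.
move=> Cg ha hL Lr i.
have [g0 g1 _ dg _] := Cg.
have gcont : forall t : R, 0 <= t <= 1 -> g x @[x --> t] --> g t.
  move=> t /dg dgt; apply: differentiable_continuous.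
  by rewrite -derivable1_diffP.
pose h t := `|theta0 - g t|.
have [allB|] := pselect (forall s, 0 <= s < 1 -> h s <= 2 * r).
  have := @seg_bound _ _ _ f Theta theta0 r c1 c10 HB g a b 1 i Cg _ allB.
  rewrite ltr01 lexx g0 g1 => /(_ isT) H.
  by rewrite -lee_fin (le_trans H hL).
move=> /existsNP[s] /not_implyP[/andP[s0 s1] /negP]; rewrite -ltNge => hs.
pose H := [set t | 0 <= t <= 1 /\ 2 * r <= h t].
have Hs : H s by split; [rewrite s0 ltW | exact: ltW].
have lbH : has_lbound H by exists 0 => t [/andP[]].
have Hne : H !=set0 by exists s.
pose ts := inf H.
have ts0 : 0 <= ts by apply: lb_le_inf => // t [/andP[]].
have tss : ts <= s by exact: ge_inf.
have ts1 : ts <= 1 by rewrite (le_trans tss) // ltW.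
have hts : 2 * r <= h ts.
  rewrite leNgt; apply/negP => hlt.
  have e0 : 0 < 2 * r - h ts by rewrite subr_gt0.
  have /cvgrPdist_lt /(_ _ e0) := gcont ts (introT andP (conj ts0 ts1)).
  move=> /nbhs_ballP [e e0' He].
  have [t Ht' tlt] := inf_adherent e0' (conj Hne lbH).
  have [/andP[t0 t1] Ht] := Ht'.
  have tst : ts <= t by exact: ge_inf Ht'.
  have bt : ball ts e t.
    rewrite -ball_normE /= distrC ger0_norm ?subr_ge0 //.
    by rewrite ltrBlDl; exact: tlt.
  have := He _ bt => /= hb.
  have : h t < 2 * r.
    rewrite /h (_ : theta0 - g t = (theta0 - g ts) + (g ts - g t)); last first.
      by rewrite addrA subrK.
    apply: le_lt_trans (ler_normD _ _) _.
    by rewrite -ltrBrDl.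
  by rewrite ltNge Ht.
have ha2 : h 0 <= r by rewrite /h g0.
have tsp : 0 < ts.
  rewrite lt_neqAle ts0 andbT; apply/eqP => ets.
  move: hts; rewrite -ets => hts; exact: (lraA r0 hts ha2).
have inside : forall s', 0 <= s' < ts -> h s' <= 2 * r.
  move=> s' /andP[s'0 s'ts]; rewrite leNgt; apply/negP => hs'.
  have Hs' : H s'.
    by split; [rewrite s'0 (le_trans (ltW s'ts) ts1) | exact: ltW].
  by move: (ge_inf lbH Hs'); rewrite leNgt s'ts.
have hn0 : `|theta0 - g ts| != 0.
  apply/eqP => h0; move: hts; rewrite /h h0 => hts; exact: (lraA r0 hts (ltW r0)).
have [j hj] := @norm_coord _ _ (theta0 - g ts) hn0.
have := @seg_bound _ _ _ f Theta theta0 r c1 c10 HB g a b ts j Cg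
  (introT andP (conj tsp ts1)) inside.
move=> /le_trans /(_ hL); rewrite lee_fin g0 => hj2.
have hja : `|theta0 ord0 j - a ord0 j| <= r.
  apply: le_trans ha; have := @coord_le_norm _ _ (theta0 - a) j; by rewrite !mxE.
have hjt : 2 * r <= `|theta0 ord0 j - g ts ord0 j|.
  by move: hts; rewrite /h hj !mxE.
have tri : `|theta0 ord0 j - g ts ord0 j| <=
    `|theta0 ord0 j - a ord0 j| + `|g ts ord0 j - a ord0 j|.
  rewrite (distrC (g ts ord0 j)).
  rewrite (_ : theta0 ord0 j - g ts ord0 j =
    (theta0 ord0 j - a ord0 j) + (a ord0 j - g ts ord0 j)); last by rewrite addrA subrK.
  exact: ler_normD.
have rj : r <= `|g ts ord0 j - a ord0 j| by exact: lraB hjt hja tri.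
have sc : 0 < Num.sqrt c1 by rewrite sqrtr_gt0.
have : Num.sqrt c1 * r <= Num.sqrt c1 * `|g ts ord0 j - a ord0 j|.
  by rewrite ler_pM2l.
move=> hh; exfalso; exact: lraC hh hj2 Lr.
Qed.


Lemma fr_length_ge0 (g : R -> 'rV[R]_p) : (0 <= fr_length f g)%E.
Proof. by apply: integral_ge0 => t _; rewrite lee_fin sqrtr_ge0. Qed.

Lemma dist_close a b d eps : 0 < eps -> `|theta0 - a| <= r ->
  (fr_dist f Theta a b <= d%:E)%E -> d + eps < Num.sqrt c1 * r ->
  Num.sqrt c1 * `|b - a| <= d + eps.
Proof.
move=> e0 ha hd hlt.
have : (ereal_inf [set fr_length f g | g in [set g | C1_curve Theta g a b]]
   < (d + eps)%:E)%E.
  by apply: le_lt_trans hd _; rewrite lte_fin ltrDl.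
move=> /ereal_inf_lt [_ [g Cg <-] hg].
have hg' : (fr_length f g <= (d + eps)%:E)%E by exact: ltW.
have pos : 0 <= d + eps.
  by rewrite -lee_fin (le_trans (fr_length_ge0 g) hg').
have [z|nz] := eqVneq `|b - a| 0; first by rewrite z mulr0.
have [j ->] := @norm_coord _ _ (b - a) nz.
rewrite !mxE.
exact: (@curve_close g a b (d + eps) Cg ha hg' hlt j).
Qed.

End Geo2.



Lemma sqrt_large {R : realType} (X : R) :
  exists N : nat, forall n, (N <= n)%N -> X < Num.sqrt n%:R.
Proof.
exists (Num.truncn (X ^+ 2)).+1 => n Nn.
have hX : X ^+ 2 < n%:R.
  rewrite -(truncn_lt_nat _ (sqr_ge0 X)).
  exact: leq_trans (leqnn _) Nn.
apply: le_lt_trans (ler_norm X) _.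
by rewrite -sqrtr_sqr ltr_sqrt // (le_lt_trans (sqr_ge0 X)).
Qed.

Lemma Pdata_le {R : realType} {p : nat} {Y : countType} (f : 'rV[R]_p -> Y -> R)
  th n (A A' : set (n.-tuple Y)) :
  (forall x : n.-tuple Y, 0 <= lik f x th) -> A `<=` A' ->
  (Pdata f th A <= Pdata f th A')%E.
Proof.
move=> l0 AA; rewrite /Pdata (esum_mkcond A) (esum_mkcond A').
apply: le_esum => x _; case: ifPn => xA.
  by rewrite ifT // inE; apply: AA; rewrite -inE.
by case: ifPn => _ //; rewrite lee_fin.
Qed.

Lemma Pdata_ge0 {R : realType} {p : nat} {Y : countType} (f : 'rV[R]_p -> Y -> R)
  th n (A : set (n.-tuple Y)) :
  (forall x : n.-tuple Y, 0 <= lik f x th) -> (0 <= Pdata f th A)%E.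
Proof. by move=> l0; apply: esum_ge0 => x _; rewrite lee_fin. Qed.

Lemma box_compact {R : realType} {p : nat} (theta0 : 'rV[R]_p) (r : R) : 0 < r ->
  compact [set th : 'rV[R]_p | `|theta0 - th| <= r].
Proof.
move=> r0; apply: bounded_closed_compact.
  exists (`|theta0| + r); split; first exact: num_real.
  move=> M HM x /= hx.
  rewrite (le_trans _ (ltW HM)) //.
  rewrite (_ : x = theta0 - (theta0 - x)); last by rewrite opprB addrC subrK.
  by rewrite (le_trans (ler_normB _ _)) // lerD2l.
rewrite (_ : [set th | _] = closed_ball theta0 r); first exact: closed_ball_closed.
by rewrite closed_ballE.
Qed.
Lemma arithA {R : realType} {s eb ea nb nba na K0 M' q : R} : 0 < s -> 0 <= q ->
  eb <= q * nb -> nb <= nba + na -> s * nba <= K0 -> na <= ea -> 0 <= na -> 0 <= nba ->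
  (q + 1) * (K0 + M') < s * eb -> M' < s * ea.
Proof.
move=> s0 q0 h1 h2 h3 h4 h5 h6 h7.
have h8 : nb <= nba + ea by lra.
have h9 : s * nb <= K0 + s * ea by nra.
have h10 : s * eb <= s * (q * nb) by rewrite ler_pM2l.
have h11 : s * (q * nb) = q * (s * nb) by rewrite mulrCA.
have h12 : q * (s * nb) <= q * (K0 + s * ea) by rewrite ler_wpM2l.
have h13 : 0 <= K0 + s * ea by nra.
have h14 : q * (K0 + s * ea) <= (q + 1) * (K0 + s * ea) by rewrite ler_wpM2r // lerDl.
have h15 : (q + 1) * (K0 + M') < (q + 1) * (K0 + s * ea) by lra.
by move: h15; rewrite ltr_pM2l ?ltrD2l //; lra.
Qed.
Lemma arithB {R : realType} {r na ea M' s : R} : 0 < r -> 0 < s -> r < na -> na <= ea ->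
  M' / r < s -> M' < s * ea.
Proof.
move=> r0 s0 h1 h2; rewrite ltr_pdivrMr // => h3.
have : s * r <= s * ea by rewrite ler_pM2l //; lra.
lra.
Qed.
Lemma arithC {R : realType} {X k s : R} : 0 < s -> 0 < k -> X / k < s -> X / s < k.
Proof. by move=> s0 k0; rewrite !ltr_pdivrMr // mulrC. Qed.
Lemma arithD {R : realType} {c s z X : R} : 0 < c -> 0 < s -> c * z <= X / s -> s * z <= X / c.
Proof. by move=> c0 s0; rewrite !ler_pdivlMr // => h; nra. Qed.


Theorem mainTheorem5 (R : realType) (p : nat) (Y : countType)
    (f : 'rV[R]_p -> Y -> R) (pi : 'rV[R]_p -> R) (Theta : set 'rV[R]_p)
    (theta0 : 'rV[R]_p)
    (mle : forall n : nat, n.-tuple Y -> 'rV[R]_p)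
    (k : nat -> nat)
    (cell : forall n : nat, n.-tuple Y -> 'I_(k n))
    (cp : forall n : nat, 'I_(k n) -> 'rV[R]_p)
    (K : set 'rV[R]_p) :
  (* parametric family: f(. | theta) is a probability mass function on Y *)
  (forall th, Theta th ->
     (forall y, 0 <= f th y) /\ (\esum_(y in [set: Y]) (f th y)%:E = 1)%E) ->
  (* (A1) *)
  open Theta ->
  (* (A2) *)
  interior Theta theta0 ->
  (* (A3) *)
  (forall th th' y, Theta th -> Theta th' -> (0 < f th y) = (0 < f th' y)) ->
  (forall th, Theta th -> 0 <= pi th) ->
  leb_int (fun th => (\1_Theta th * pi th)%:E) = 1%E ->
  (\forall th \near theta0, {for th, continuous pi} /\ 0 < pi th) ->
  (forall n (x : n.-tuple Y), (prior_pred f pi Theta x < +oo)%E) ->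
  (* (A4) *)
  (forall n (x : n.-tuple Y), Ck 3 Theta (fun th => ln (lik f x th))) ->
  (forall n (x : n.-tuple Y), Theta (mle n x) /\
     forall th, Theta th -> lik f x th <= lik f x (mle n x)) ->
  (* (A5) *)
  fisher_exists f Theta ->
  (forall K' : set 'rV[R]_p, compact K' -> K' `<=` Theta ->
     exists c1 c2 : R, 0 < c1 <= c2 /\
       forall th, K' th -> forall v : 'rV[R]_p,
         c1 * enorm v ^+ 2 <= qform (fisher1 f th) v <= c2 * enorm v ^+ 2) ->
  (* (A6): standard MLE asymptotics *)
  Op_sqrt (Pdata f theta0) (fun n x => enorm (mle n x - theta0)) ->
  (* optimal SMML partitions with codepoints, for every n *)
  (forall n, smml_optimal f pi Theta (cell n) (cp n)) ->
  (* (A7): Fisher--Rao mesh size of the quantisation is O(n^{-1/2}) on compacts *)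
  (forall K' : set 'rV[R]_p, compact K' -> K' `<=` Theta ->
     exists delta : nat -> 'rV[R]_p -> R,
       (forall n (x : n.-tuple Y), K' (mle n x) ->
          (fr_dist f Theta (mle n x) (cp n (cell n x)) <= (delta n (mle n x))%:E)%E) /\
       exists C : R, exists N : nat, forall n, (N <= n)%N ->
          forall th, K' th -> delta n th <= C / Num.sqrt n%:R) ->
  (* the fixed compact K *)
  compact K -> K `<=` Theta -> interior K theta0 ->
  (* conclusion *)
  conv_in_prob (Pdata f theta0) (fun n x => cp n (cell n x)) theta0 /\
  Op_sqrt (Pdata f theta0) (fun n x => enorm (cp n (cell n x) - theta0)).
Proof.
move=> pmf oT iT A3 pi0 pi1 pic rfin Ck mleH fish A5 A6 opt A7 cK KT iK.
have /nbhs_ballP [e e0 He] := iT.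
have {}e0 : 0 < e := e0.
have T0 : Theta theta0 by apply: He; exact: ballxx.
pose r := e / 4.
have r0 : 0 < r by rewrite divr_gt0.
pose B := [set th : 'rV[R]_p | `|theta0 - th| <= 2 * r].
have BT : B `<=` Theta.
  move=> th Bth; apply: He; rewrite -ball_normE /=.
  apply: le_lt_trans Bth _; rewrite /r; lra.
have cB : compact B by apply: box_compact; rewrite mulr_gt0.
have [c1 [c2 [/andP[c10 c12] Hc]]] := A5 B cB BT.
have HB : forall th, `|theta0 - th| <= 2 * r -> forall v : 'rV[R]_p,
    c1 * enorm v ^+ 2 <= qform (fisher1 f th) v.
  by move=> th hth v; have /andP[] := Hc th hth v.
have [delta [Hd [C [N7 HC]]]] := A7 B cB BT.
have lik0 : forall n (x : n.-tuple Y), 0 <= lik f x theta0.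
  move=> n x; apply: prodr_ge0 => i _; exact: (pmf _ T0).1.
pose Cp := `|C| + 1.
have Cp0 : 0 < Cp by rewrite /Cp ltr_pwDr.
have key : forall n (x : n.-tuple Y), (N7 <= n)%N -> (0 < n)%N ->
    2 * Cp / Num.sqrt n%:R < Num.sqrt c1 * r -> `|theta0 - mle n x| <= r ->
    Num.sqrt c1 * `|cp n (cell n x) - mle n x| <= 2 * Cp / Num.sqrt n%:R.
  move=> n x nN n0 hn ha.
  have sn : 0 < Num.sqrt (n%:R : R) by rewrite sqrtr_gt0 ltr0n.
  have Ba : B (mle n x) by rewrite /B /= (le_trans ha) //; lra.
  have hd := Hd n x Ba.
  have hC := HC n nN _ Ba.
  have hCp : delta n (mle n x) + Cp / Num.sqrt n%:R <= 2 * Cp / Num.sqrt n%:R.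
    have hq : C / Num.sqrt n%:R <= Cp / Num.sqrt n%:R.
      rewrite ler_pM2r ?invr_gt0 // /Cp (le_trans (ler_norm C)) //.
      by rewrite lerDl.
    rewrite -mulrA; move: hC hq; set q := Cp / _; set q' := C / _.
    move=> *; lra.
  have hCp2 := hCp.
  apply: le_trans hCp.
  apply: (@dist_close _ _ _ f Theta theta0 r c1 r0 c10 HB) => //.
    by rewrite divr_gt0.
  exact: le_lt_trans hCp2 hn.
have sc : 0 < Num.sqrt c1 by rewrite sqrtr_gt0.
have OP : Op_sqrt (Pdata f theta0) (fun n x => enorm (cp n (cell n x) - theta0)).
  move=> eps eps0.
  have [M' [M'0 [N6 H6]]] := A6 eps eps0.
  pose K0 := 2 * Cp / Num.sqrt c1.
  have K00 : 0 < K0 by rewrite divr_gt0 // mulr_gt0.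
  exists ((p%:R + 1) * (K0 + M')); split.
    by rewrite mulr_gt0 // ?addr_gt0 // ltr_pwDr.
  have [Na HNa] := sqrt_large (2 * Cp / (Num.sqrt c1 * r)).
  have [Nb HNb] := sqrt_large (M' / r).
  exists (maxn N6 (maxn N7 (maxn Na (maxn Nb 1)))) => n.
  rewrite !geq_max => /and5P[nN6 nN7 nNa nNb n1].
  have sn : 0 < Num.sqrt (n%:R : R) by rewrite sqrtr_gt0 ltr0n.
  apply: le_lt_trans (H6 n nN6).
  apply: Pdata_le => // x /= hM.
  have [ha|ha] := leP `|theta0 - mle n x| r.
    have hn' : 2 * Cp / Num.sqrt n%:R < Num.sqrt c1 * r.
      by apply: arithC => //; [rewrite mulr_gt0 | exact: HNa].
    have hk := key n x nN7 n1 hn' ha.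
    have hba := arithD sc sn hk.
    set a := mle n x in hba *; set b := cp n (cell n x) in hba hM *.
    have e1 := @enorm_le_norm _ _ (b - theta0).
    have e2 : `|b - theta0| <= `|b - a| + `|a - theta0|.
      by rewrite (_ : b - theta0 = (b - a) + (a - theta0)) ?ler_normD // addrA subrK.
    have e3 := @norm_le_enorm _ _ (a - theta0).
    exact: (arithA sn (ler0n _ p) e1 e2 hba e3 (normr_ge0 _) (normr_ge0 _) hM).
  apply: (arithB r0 sn ha) => //.
    by rewrite distrC; exact: norm_le_enorm.
  exact: HNb.
split => //.
move=> eta eta0.
have ev : forall eps : R, 0 < eps -> \forall n \near \oo,
    (Pdata f theta0 [set x : n.-tuple Y | (eta < enorm (cp n (cell n x) - theta0))%R]
      < eps%:E)%E.
  move=> eps ep0; have [M [M0 [N HN]]] := OP eps ep0.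
  have [N2 HN2] := sqrt_large (M / eta).
  exists (maxn N (maxn N2 1)) => // n /=; rewrite !geq_max => /and3P[nN nN2 n1].
  have sn : 0 < Num.sqrt (n%:R : R) by rewrite sqrtr_gt0 ltr0n.
  apply: le_lt_trans (HN n nN).
  apply: Pdata_le => // x /= hx.
  exact: (arithB eta0 sn hx (lexx _) (HN2 n nN2)).
have fin : \forall n \near \oo,
    (Pdata f theta0 [set x : n.-tuple Y | (eta < enorm (cp n (cell n x) - theta0))%R])
      \is a fin_num.
  apply: filterS (ev 1 ltr01) => n hn.
  by rewrite ge0_fin_numE ?Pdata_ge0 // (lt_trans hn) // ltry.
apply/fine_cvgP; split => //.
apply/cvgrPdist_lt => eps ep0.
near=> n.
have hn : (Pdata f theta0 [set x : n.-tuple Y | (eta < enorm (cp n (cell n x) - theta0))%R]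
      < eps%:E)%E by near: n; exact: ev.
have fn : (Pdata f theta0 [set x : n.-tuple Y | (eta < enorm (cp n (cell n x) - theta0))%R])
      \is a fin_num by near: n; exact: fin.
rewrite /= sub0r normrN ger0_norm ?fine_ge0 ?Pdata_ge0 //.
by rewrite -lte_fin fineK.
Unshelve. all: by end_near.
Qed.
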